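(* Let $S_0=\{x\in\mathbb{C}:0<{\rm Im}(x)<\pi\}$. Then for all $x,y\in S_0$: (1) $j^*_{S_0}(x,y)\le p_{S_0}(x,y)\le\sqrt2\,j^*_{S_0}(x,y)$; (2) $j^*_{S_0}(x,y)\le s_{S_0}(x,y)\le\sqrt2\,j^*_{S_0}(x,y)$; (3) $p_{S_0}(x,y)/\sqrt2\le s_{S_0}(x,y)\le p_{S_0}(x,y)$. Furthermore, in each case the constants are sharp.
   Context: For a domain $G\subsetneq\mathbb{C}$, $d_G(x)=\inf\{|x-z|:z\in\partial G\}$, $s_G(x,y)=\frac{|x-y|}{\inf_{z\in\partial G}(|x-z|+|z-y|)}$, $j^*_G(x,y)=\frac{|x-y|}{|x-y|+2\min\{d_G(x),d_G(y)\}}$, $p_G(x,y)=\frac{|x-y|}{\sqrt{|x-y|^2+4d_G(x)d_G(y)}}$. *)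

(* Defs.v *)
From Stdlib Require Import Reals.
From Coquelicot Require Import Coquelicot.
Open Scope R_scope.

Definition boundary (G : C -> Prop) (z : C) : Prop :=
  forall eps : R, 0 < eps ->
    (exists w : C, G w /\ Cmod (Cminus w z) < eps) /\
    (exists w : C, ~ G w /\ Cmod (Cminus w z) < eps).

Definition dist_bd (G : C -> Prop) (x : C) : R :=
  real (Glb_Rbar (fun r => exists z, boundary G z /\ r = Cmod (Cminus x z))).

Definition s_metric (G : C -> Prop) (x y : C) : R :=
  Cmod (Cminus x y) /
  real (Glb_Rbar (fun r => exists z, boundary G z /\
                              r = Cmod (Cminus x z) + Cmod (Cminus z y))).

Definition jstar (G : C -> Prop) (x y : C) : R :=
  Cmod (Cminus x y) /
  (Cmod (Cminus x y) + 2 * Rmin (dist_bd G x) (dist_bd G y)).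

Definition p_metric (G : C -> Prop) (x y : C) : R :=
  Cmod (Cminus x y) /
  sqrt (Cmod (Cminus x y) ^ 2 + 4 * dist_bd G x * dist_bd G y).

Definition S0 (z : C) : Prop := 0 < Im z < PI.

(* Main.v *)
Require Import Defs.
From Stdlib Require Import Reals Lra Psatz.
From Coquelicot Require Import Coquelicot.
Open Scope R_scope.

Lemma cmod_eq (x y : C) : Cmod (Cminus x y) = sqrt ((fst x - fst y)^2 + (snd x - snd y)^2).
Proof. destruct x, y; reflexivity. Qed.

Lemma snd_le_cmod (x y : C) : Rabs (snd x - snd y) <= Cmod (Cminus x y).
Proof. rewrite cmod_eq. destruct (sqrt_plus_sqr (fst x - fst y) (snd x - snd y)) as [H _].
  eapply Rle_trans; [|exact H]. apply Rmax_r. Qed.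

Lemma sq_le_sqrt X Y : 0 <= Y -> X <= Y^2 -> sqrt X <= Y.
Proof. intros. rewrite <- (sqrt_pow2 Y) by auto. apply sqrt_le_1_alt; auto. Qed.

Lemma le_sqrt X Y : 0 <= Y -> Y^2 <= X -> Y <= sqrt X.
Proof. intros. rewrite <- (sqrt_pow2 Y) at 1 by auto. apply sqrt_le_1_alt; auto. Qed.

Lemma lt_sqrt X Y : 0 <= Y -> Y^2 < X -> Y < sqrt X.
Proof. intros. rewrite <- (sqrt_pow2 Y) at 1 by auto. apply sqrt_lt_1_alt; split; auto.
  nra. Qed.

Lemma sqrt_lt_sq X Y : 0 <= X -> 0 < Y -> X < Y^2 -> sqrt X < Y.
Proof. intros. rewrite <- (sqrt_pow2 Y) by lra. apply sqrt_lt_1_alt; split; auto. Qed.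

Lemma minkowski a b c d :
  sqrt ((a+c)^2 + (b+d)^2) <= sqrt (a^2+b^2) + sqrt (c^2+d^2).
Proof.
  apply sq_le_sqrt.
  - pose proof (sqrt_pos (a^2+b^2)); pose proof (sqrt_pos (c^2+d^2)); lra.
  - pose proof (sqrt_cauchy a b c d) as H. unfold Rsqr in H.
    pose proof (pow2_sqrt (a^2+b^2)) as H1. pose proof (pow2_sqrt (c^2+d^2)) as H2.
    replace (a*a+b*b) with (a^2+b^2) in H by ring.
    replace (c*c+d*d) with (c^2+d^2) in H by ring.
    assert (0 <= a^2+b^2) by nra. assert (0 <= c^2+d^2) by nra.
    specialize (H1 ltac:(auto)). specialize (H2 ltac:(auto)). nra.
Qed.

Lemma glb_bounds (E : R -> Prop) L e0 :
  (forall e, E e -> L <= e) -> E e0 ->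
  L <= real (Glb_Rbar E) /\ forall e, E e -> real (Glb_Rbar E) <= e.
Proof.
  intros HL He0. destruct (Glb_Rbar_correct E) as [H1 H2].
  destruct (Glb_Rbar E) as [g| |]; simpl.
  - split.
    + apply (H2 (Finite L)). intros e He. simpl. auto.
    + intros e He. apply (H1 e He).
  - exfalso. apply (H1 e0 He0).
  - exfalso. apply (H2 (Finite L)). intros e He. simpl. auto.
Qed.

Lemma ratio_le t A B c : 0 <= t -> 0 < A -> 0 < B -> B <= c*A -> t/A <= c*(t/B).
Proof.
  intros. assert (E : c*(t/B) - t/A = (t/(A*B))*(c*A-B)) by (field; lra).
  assert (0 <= t/(A*B)). { apply Rdiv_le_0_compat; nra. }
  nra.
Qed.

Lemma ratio_lt t A B c : 0 < t -> 0 < A -> 0 < B -> B < c*A -> t/A < c*(t/B).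
Proof.
  intros. assert (E : c*(t/B) - t/A = (t/(A*B))*(c*A-B)) by (field; lra).
  assert (0 < t/(A*B)). { apply Rdiv_lt_0_compat; nra. }
  nra.
Qed.

Lemma ratio_lt' t A B c : 0 < t -> 0 < A -> 0 < B -> c*A < B -> c*(t/B) < t/A.
Proof.
  intros. assert (E : c*(t/B) - t/A = (t/(A*B))*(c*A-B)) by (field; lra).
  assert (0 < t/(A*B)). { apply Rdiv_lt_0_compat; nra. }
  nra.
Qed.
Lemma real_main t dx dy I :
  0 <= t -> 0 < dx -> 0 < dy -> dx <= dy + t -> dy <= dx + t ->
  sqrt (t^2 + 4*dx*dy) <= I -> I <= t + 2 * Rmin dx dy ->
  let J := t / (t + 2 * Rmin dx dy) in
  let P := t / sqrt (t^2 + 4*dx*dy) in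
  let S := t / I in
  (J <= P /\ P <= sqrt 2 * J) /\ (J <= S /\ S <= sqrt 2 * J) /\
  (P / sqrt 2 <= S /\ S <= P).
Proof.
  intros Ht Hx Hy H1 H2 HI1 HI2 J P S.
  set (m := Rmin dx dy) in *.
  assert (Hm : 0 < m /\ m <= dx /\ m <= dy /\ (m = dx \/ m = dy)).
  { unfold m, Rmin. destruct (Rle_dec dx dy); lra. }
  destruct Hm as (Hm0 & Hm1 & Hm2 & Hm3). clearbody m.
  set (Q := sqrt (t^2 + 4*dx*dy)) in *.
  assert (HQ : 0 < Q). { apply sqrt_lt_R0. nra. }
  assert (Q1 : Q <= t + 2*m).
  { apply sq_le_sqrt. lra. destruct Hm3 as [-> | ->]; nra. }
  assert (s2 : sqrt 2 * sqrt 2 = 2) by (apply sqrt_sqrt; lra).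
  assert (s2p : 0 < sqrt 2) by (apply sqrt_lt_R0; lra).
  assert (Q2 : t + 2*m <= sqrt 2 * Q).
  { unfold Q. rewrite <- sqrt_mult by (try lra; nra).
    apply le_sqrt. lra.
    assert (m*m <= dx*dy) by (apply Rmult_le_compat; lra).
    pose proof (pow2_ge_0 (t-2*m)). nra. }
  assert (HIp : 0 < I) by lra.
  assert (HB : 0 < t + 2*m) by lra.
  split; [split|split; [split|split]].
  - assert (H := ratio_le t (t+2*m) Q 1 Ht HB HQ ltac:(lra)). unfold J, P. lra.
  - apply ratio_le; lra.
  - assert (H := ratio_le t (t+2*m) I 1 Ht HB HIp ltac:(lra)). unfold J, S. lra.
  - apply ratio_le; try lra. nra.
  - assert (P <= sqrt 2 * S). { apply ratio_le; lra. }
    unfold Rdiv at 1. apply (Rmult_le_reg_l (sqrt 2)); auto.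
    replace (sqrt 2 * (P * / sqrt 2)) with P by (field; lra). lra.
  - assert (H := ratio_le t I Q 1 Ht HIp HQ ltac:(lra)). unfold S, P. lra.
Qed.

Lemma PI_gt3 : 3 < PI.
Proof. pose proof PI2_3_2. lra. Qed.

Lemma S0_iff (z : C) : S0 z <-> 0 < snd z < PI.
Proof. unfold S0, Im. tauto. Qed.

Lemma bd_char z : boundary S0 z -> snd z = 0 \/ snd z = PI.
Proof.
  intros Hb. destruct (Rtotal_order (snd z) 0) as [Hlt|[Heq|Hgt]]; [|now left|].
  - exfalso. destruct (Hb (- snd z) ltac:(lra)) as [[w [Hw Hd]] _].
    pose proof (snd_le_cmod w z). apply S0_iff in Hw.
    apply Rabs_le_between in H. destruct H, Hw. unfold Im in *. lra.
  - destruct (Rtotal_order (snd z) PI) as [Hlt|[Heq|Hgt']]; [|now right|].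
    + exfalso. destruct (Hb (Rmin (snd z) (PI - snd z)) ltac:(apply Rmin_glb_lt; lra)) as [_ [w [Hw Hd]]].
      pose proof (snd_le_cmod w z). apply Hw. apply S0_iff.
      apply Rabs_le_between in H. unfold Im in *.
      pose proof (Rmin_l (snd z) (PI - snd z)). pose proof (Rmin_r (snd z) (PI - snd z)). lra.
    + exfalso. destruct (Hb (snd z - PI) ltac:(lra)) as [[w [Hw Hd]] _].
      pose proof (snd_le_cmod w z). apply S0_iff in Hw.
      apply Rabs_le_between in H. destruct H, Hw. unfold Im in *. lra.
Qed.

Lemma cmod_vert a b c d : a = c -> Cmod (Cminus (a,b) (c,d)) = Rabs (b - d).
Proof. intros ->. rewrite cmod_eq. simpl. replace ((c-c)^2 + (b-d)^2) with ((b-d)^2) by ring.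
  rewrite <- sqrt_Rsqr_abs. unfold Rsqr. f_equal. ring. Qed.

Lemma bd_0 r : boundary S0 (r, 0).
Proof.
  intros eps He. pose proof PI_gt3. split.
  - exists (r, Rmin (eps/2) 1). split.
    + apply S0_iff. simpl. pose proof (Rmin_r (eps/2) 1).
      split; [apply Rmin_glb_lt; lra | lra].
    + rewrite cmod_vert by auto. pose proof (Rmin_l (eps/2) 1).
      assert (0 < Rmin (eps/2) 1) by (apply Rmin_glb_lt; lra).
      rewrite Rabs_right by lra. lra.
  - exists (r, 0). split.
    + rewrite S0_iff. simpl. lra.
    + rewrite cmod_vert by auto. rewrite Rminus_0_r, Rabs_R0. lra.
Qed.

Lemma bd_PI r : boundary S0 (r, PI).
Proof.
  intros eps He. pose proof PI_gt3. split.
  - exists (r, PI - Rmin (eps/2) 1). split.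
    + apply S0_iff. simpl. pose proof (Rmin_r (eps/2) 1).
      assert (0 < Rmin (eps/2) 1) by (apply Rmin_glb_lt; lra). lra.
    + rewrite cmod_vert by auto. pose proof (Rmin_l (eps/2) 1).
      assert (0 < Rmin (eps/2) 1) by (apply Rmin_glb_lt; lra).
      rewrite Rabs_left by lra. lra.
  - exists (r, PI). split.
    + rewrite S0_iff. simpl. lra.
    + rewrite cmod_vert by auto. rewrite Rminus_diag, Rabs_R0. lra.
Qed.

Lemma dist_eq x : S0 x -> dist_bd S0 x = Rmin (snd x) (PI - snd x).
Proof.
  intros Hx. destruct x as [x1 x2]. destruct Hx as [Hx1 Hx2]. unfold Im in *. simpl in *.
  unfold dist_bd.
  destruct (glb_bounds (fun r => exists z, boundary S0 z /\ r = Cmod (Cminus (x1,x2) z))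
     (Rmin x2 (PI - x2)) x2) as [L U].
  - intros e [z [Hz ->]]. pose proof (snd_le_cmod (x1,x2) z) as H.
    apply Rabs_le_between in H. simpl in H.
    destruct (bd_char z Hz) as [E|E]; rewrite E in H.
    + pose proof (Rmin_l x2 (PI - x2)). lra.
    + pose proof (Rmin_r x2 (PI - x2)). lra.
  - exists (x1, 0). split. apply bd_0. rewrite cmod_vert by auto.
    rewrite Rminus_0_r, Rabs_right; lra.
  - apply Rle_antisym; auto.
    assert (A1 : real (Glb_Rbar (fun r => exists z, boundary S0 z /\ r = Cmod (Cminus (x1,x2) z))) <= x2).
    { apply U. exists (x1, 0). split. apply bd_0. rewrite cmod_vert by auto.
      rewrite Rminus_0_r, Rabs_right; lra. }
    assert (A2 : real (Glb_Rbar (fun r => exists z, boundary S0 z /\ r = Cmod (Cminus (x1,x2) z))) <= PI - x2).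
    { apply U. exists (x1, PI). split. apply bd_PI. rewrite cmod_vert by auto.
      rewrite Rabs_left; lra. }
    unfold Rmin. destruct (Rle_dec x2 (PI - x2)); lra.
Qed.

Lemma S0_get z : S0 z -> 0 < snd z /\ snd z < PI.
Proof. unfold S0, Im. auto. Qed.

Lemma inf_lower x y z : S0 x -> S0 y -> boundary S0 z ->
  sqrt (Cmod (Cminus x y)^2 + 4 * dist_bd S0 x * dist_bd S0 y)
  <= Cmod (Cminus x z) + Cmod (Cminus z y).
Proof.
  intros Hx Hy Hz. rewrite (dist_eq x Hx), (dist_eq y Hy).
  destruct (bd_char z Hz) as [E|E];
  apply S0_get in Hx; apply S0_get in Hy; destruct Hx as [Hx1 Hx2]; destruct Hy as [Hy1 Hy2];
  rewrite !cmod_eq; destruct x as [x1 x2], y as [y1 y2], z as [z1 z2]; cbn [fst snd] in *; subst z2;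
  rewrite pow2_sqrt by (apply Rplus_le_le_0_compat; apply pow2_ge_0);
  pose proof (Rmin_l x2 (PI - x2)); pose proof (Rmin_r x2 (PI - x2));
  pose proof (Rmin_l y2 (PI - y2)); pose proof (Rmin_r y2 (PI - y2));
  assert (0 <= Rmin x2 (PI - x2)) by (apply Rmin_glb; lra);
  assert (0 <= Rmin y2 (PI - y2)) by (apply Rmin_glb; lra).
  - replace ((z1 - y1)^2 + (0 - y2)^2) with ((z1 - y1)^2 + y2^2) by ring.
    eapply Rle_trans; [| apply (minkowski (x1 - z1) (x2 - 0) (z1 - y1) y2)].
    apply sqrt_le_1_alt.
    assert (Rmin x2 (PI - x2) * Rmin y2 (PI - y2) <= x2 * y2) by (apply Rmult_le_compat; lra).
    nra.
  - replace ((z1 - y1)^2 + (PI - y2)^2) with ((z1 - y1)^2 + (y2 - PI)^2) by ring.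
    eapply Rle_trans; [| apply (minkowski (x1 - z1) (x2 - PI) (z1 - y1) (y2 - PI))].
    apply sqrt_le_1_alt.
    assert (Rmin x2 (PI - x2) * Rmin y2 (PI - y2) <= (PI - x2) * (PI - y2)) by (apply Rmult_le_compat; lra).
    nra.
Qed.

Lemma near_bd x : S0 x -> exists z, boundary S0 z /\
  Cmod (Cminus x z) = dist_bd S0 x /\ Cmod (Cminus z x) = dist_bd S0 x.
Proof.
  intros Hx. rewrite (dist_eq x Hx). apply S0_get in Hx. destruct x as [x1 x2]. simpl in *.
  destruct Hx as [Hx1 Hx2].
  unfold Rmin. destruct (Rle_dec x2 (PI - x2)).
  - exists (x1, 0). split. apply bd_0. rewrite !cmod_vert by auto.
    rewrite Rminus_0_r, Rminus_0_l, Rabs_Ropp, Rabs_right; lra.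
  - exists (x1, PI). split. apply bd_PI. rewrite !cmod_vert by auto.
    rewrite Rabs_left by lra. rewrite Rabs_right by lra. split; ring.
Qed.

Lemma cminus_split (a b c : C) : Cminus a c = Cplus (Cminus a b) (Cminus b c).
Proof. destruct a, b, c. apply injective_projections; simpl; ring. Qed.

Lemma inf_upper x y : S0 x -> S0 y -> exists z, boundary S0 z /\
  Cmod (Cminus x z) + Cmod (Cminus z y) <=
  Cmod (Cminus x y) + 2 * Rmin (dist_bd S0 x) (dist_bd S0 y).
Proof.
  intros Hx Hy. unfold Rmin. destruct (Rle_dec (dist_bd S0 x) (dist_bd S0 y)).
  - destruct (near_bd x Hx) as [z [Hz [E1 E2]]]. exists z. split; auto.
    pose proof (Cmod_triangle (Cminus z x) (Cminus x y)) as T.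
    rewrite <- cminus_split in T. lra.
  - destruct (near_bd y Hy) as [z [Hz [E1 E2]]]. exists z. split; auto.
    pose proof (Cmod_triangle (Cminus x y) (Cminus y z)) as T.
    rewrite <- cminus_split in T. lra.
Qed.

Lemma s_bounds x y : S0 x -> S0 y ->
  let I := real (Glb_Rbar (fun r => exists z, boundary S0 z /\
                              r = Cmod (Cminus x z) + Cmod (Cminus z y))) in
  sqrt (Cmod (Cminus x y)^2 + 4 * dist_bd S0 x * dist_bd S0 y) <= I /\
  (forall z, boundary S0 z -> I <= Cmod (Cminus x z) + Cmod (Cminus z y)).
Proof.
  intros Hx Hy I. destruct (inf_upper x y Hx Hy) as [z0 [Hz0 _]].
  destruct (glb_bounds (fun r => exists z, boundary S0 z /\
                              r = Cmod (Cminus x z) + Cmod (Cminus z y))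
     (sqrt (Cmod (Cminus x y)^2 + 4 * dist_bd S0 x * dist_bd S0 y))
     (Cmod (Cminus x z0) + Cmod (Cminus z0 y))) as [L U].
  - intros e [z [Hz ->]]. apply inf_lower; auto.
  - exists z0; auto.
  - split; auto. intros z Hz. apply U. exists z; auto.
Qed.

Lemma ineqs x y : S0 x -> S0 y ->
  (jstar S0 x y <= p_metric S0 x y /\ p_metric S0 x y <= sqrt 2 * jstar S0 x y) /\
  (jstar S0 x y <= s_metric S0 x y /\ s_metric S0 x y <= sqrt 2 * jstar S0 x y) /\
  (p_metric S0 x y / sqrt 2 <= s_metric S0 x y /\ s_metric S0 x y <= p_metric S0 x y).
Proof.
  intros Hx Hy. destruct (s_bounds x y Hx Hy) as [L U].
  destruct (inf_upper x y Hx Hy) as [z [Hz Hup]]. apply U in Hz.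
  assert (Ht : 0 <= Cmod (Cminus x y)) by (rewrite cmod_eq; apply sqrt_pos).
  assert (Lip : dist_bd S0 x <= dist_bd S0 y + Cmod (Cminus x y) /\
                dist_bd S0 y <= dist_bd S0 x + Cmod (Cminus x y)).
  { pose proof (snd_le_cmod x y) as H. apply Rabs_le_between in H. destruct H.
    rewrite (dist_eq x Hx), (dist_eq y Hy). unfold Rmin.
    destruct (Rle_dec (snd x) (PI - snd x)), (Rle_dec (snd y) (PI - snd y)); split; lra. }
  destruct Lip as [Lip1 Lip2].
  assert (Dx : 0 < dist_bd S0 x).
  { rewrite (dist_eq x Hx). apply S0_get in Hx. destruct Hx. apply Rmin_glb_lt; lra. }
  assert (Dy : 0 < dist_bd S0 y).
  { rewrite (dist_eq y Hy). apply S0_get in Hy. destruct Hy. apply Rmin_glb_lt; lra. }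
  pose proof (real_main _ _ _ _ Ht Dx Dy Lip1 Lip2 L ltac:(lra)) as R.
  cbv zeta in R. unfold jstar, p_metric, s_metric. exact R.
Qed.

Lemma exA a : 0 < a ->
  S0 (0,1) /\ S0 (a,1) /\ Cmod (Cminus (0,1) (a,1)) = a /\
  dist_bd S0 (0,1) = 1 /\ dist_bd S0 (a,1) = 1 /\
  real (Glb_Rbar (fun r => exists z, boundary S0 z /\
        r = Cmod (Cminus (0,1) z) + Cmod (Cminus z (a,1)))) = sqrt (a^2 + 4*1*1).
Proof.
  intros Ha. pose proof PI_gt3.
  assert (Sx : S0 (0,1)) by (unfold S0, Im; cbn [snd]; split; lra).
  assert (Sy : S0 (a,1)) by (unfold S0, Im; cbn [snd]; split; lra).
  assert (Ht : Cmod (Cminus (0,1) (a,1)) = a).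
  { rewrite cmod_eq; cbn [fst snd]. replace ((0-a)^2 + (1-1)^2) with (a^2) by ring.
    apply sqrt_pow2; lra. }
  assert (D1 : dist_bd S0 (0,1) = 1).
  { rewrite dist_eq by auto. cbn [snd]. apply Rmin_left. lra. }
  assert (D2 : dist_bd S0 (a,1) = 1).
  { rewrite dist_eq by auto. cbn [snd]. apply Rmin_left. lra. }
  do 5 (split; auto).
  destruct (s_bounds _ _ Sx Sy) as [L U]. cbv zeta in L, U.
  rewrite Ht, D1, D2 in L.
  apply Rle_antisym; auto.
  eapply Rle_trans. apply (U (a/2, 0) (bd_0 _)).
  rewrite !cmod_eq. cbn [fst snd].
  replace ((0 - a/2)^2 + (1-0)^2) with (a^2/4+1) by field.
  replace ((a/2 - a)^2 + (0-1)^2) with (a^2/4+1) by field.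
  right. symmetry. apply sqrt_lem_1.
  - nra.
  - pose proof (sqrt_pos (a^2/4+1)). lra.
  - assert (sqrt (a^2/4+1) * sqrt (a^2/4+1) = a^2/4+1) by (apply sqrt_sqrt; nra).
    nra.
Qed.

Lemma exB :
  S0 (0,PI/4) /\ S0 (0,3*PI/4) /\ Cmod (Cminus (0,PI/4) (0,3*PI/4)) = PI/2 /\
  dist_bd S0 (0,PI/4) = PI/4 /\ dist_bd S0 (0,3*PI/4) = PI/4 /\
  PI <= real (Glb_Rbar (fun r => exists z, boundary S0 z /\
        r = Cmod (Cminus (0,PI/4) z) + Cmod (Cminus z (0,3*PI/4)))).
Proof.
  pose proof PI_gt3.
  assert (Sx : S0 (0,PI/4)) by (unfold S0, Im; cbn [snd]; split; lra).
  assert (Sy : S0 (0,3*PI/4)) by (unfold S0, Im; cbn [snd]; split; lra).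
  split; auto. split; auto. split.
  { rewrite cmod_vert by auto. rewrite Rabs_left by lra. field. }
  split. { rewrite dist_eq by auto. cbn [snd]. apply Rmin_left. lra. }
  split. { rewrite dist_eq by auto. cbn [snd]. rewrite Rmin_right by lra. field. }
  destruct (glb_bounds (fun r => exists z, boundary S0 z /\
        r = Cmod (Cminus (0,PI/4) z) + Cmod (Cminus z (0,3*PI/4))) PI
        (Cmod (Cminus (0,PI/4) (0,0)) + Cmod (Cminus (0,0) (0,3*PI/4)))) as [L _]; auto.
  - intros e [z [Hz ->]].
    pose proof (snd_le_cmod (0,PI/4) z) as H1. pose proof (snd_le_cmod z (0,3*PI/4)) as H2.
    apply Rabs_le_between in H1. apply Rabs_le_between in H2.
    destruct H1, H2. cbn [snd] in *.
    destruct (bd_char z Hz) as [E|E]; rewrite E in *; lra.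
  - exists (0,0). split; auto. apply bd_0.
Qed.

Lemma sqrt8 : sqrt (2^2 + 4*1*1) = 2 * sqrt 2.
Proof.
  apply sqrt_lem_1. lra. pose proof (sqrt_pos 2). lra.
  assert (sqrt 2 * sqrt 2 = 2) by (apply sqrt_sqrt; lra). nra.
Qed.

Theorem theorem3p12 :
  (* (1) *)
  (forall x y : C, S0 x -> S0 y ->
     jstar S0 x y <= p_metric S0 x y /\
     p_metric S0 x y <= sqrt 2 * jstar S0 x y) /\
  (forall c : R, 1 < c ->
     exists x y : C, S0 x /\ S0 y /\ p_metric S0 x y < c * jstar S0 x y) /\
  (forall c : R, c < sqrt 2 ->
     exists x y : C, S0 x /\ S0 y /\ c * jstar S0 x y < p_metric S0 x y) /\
  (* (2) *)
  (forall x y : C, S0 x -> S0 y ->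
     jstar S0 x y <= s_metric S0 x y /\
     s_metric S0 x y <= sqrt 2 * jstar S0 x y) /\
  (forall c : R, 1 < c ->
     exists x y : C, S0 x /\ S0 y /\ s_metric S0 x y < c * jstar S0 x y) /\
  (forall c : R, c < sqrt 2 ->
     exists x y : C, S0 x /\ S0 y /\ c * jstar S0 x y < s_metric S0 x y) /\
  (* (3) *)
  (forall x y : C, S0 x -> S0 y ->
     p_metric S0 x y / sqrt 2 <= s_metric S0 x y /\
     s_metric S0 x y <= p_metric S0 x y) /\
  (forall c : R, / sqrt 2 < c ->
     exists x y : C, S0 x /\ S0 y /\ s_metric S0 x y < c * p_metric S0 x y) /\
  (forall c : R, c < 1 ->
     exists x y : C, S0 x /\ S0 y /\ c * p_metric S0 x y < s_metric S0 x y).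
Proof.
  assert (s2 : sqrt 2 * sqrt 2 = 2) by (apply sqrt_sqrt; lra).
  assert (s2p : 0 < sqrt 2) by (apply sqrt_lt_R0; lra).
  assert (large : forall c, 1 < c -> exists x y, S0 x /\ S0 y /\
     p_metric S0 x y < c * jstar S0 x y /\ s_metric S0 x y = p_metric S0 x y).
  { intros c Hc. set (a := 2/(c-1)+1).
    assert (Ha : 0 < a). { unfold a. assert (0 < 2/(c-1)) by (apply Rdiv_lt_0_compat; lra). lra. }
    assert (Hac : a*(c-1) = 2 + (c-1)) by (unfold a; field; lra).
    destruct (exA a Ha) as (Sx & Sy & Ht & D1 & D2 & I).
    exists (0,1), (a,1). do 2 (split; auto).
    unfold p_metric, jstar, s_metric. rewrite Ht, D1, D2, I, Rmin_left by lra.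
    split; auto. apply ratio_lt; try lra. apply sqrt_lt_R0; nra.
    assert (a < sqrt (a^2+4*1*1)) by (apply lt_sqrt; nra). nra. }
  assert (mid : forall c, c < sqrt 2 -> exists x y, S0 x /\ S0 y /\
     c * jstar S0 x y < p_metric S0 x y /\ s_metric S0 x y = p_metric S0 x y).
  { intros c Hc.
    destruct (exA 2 ltac:(lra)) as (Sx & Sy & Ht & D1 & D2 & I).
    exists (0,1), (2,1). do 2 (split; auto).
    unfold p_metric, jstar, s_metric. rewrite Ht, D1, D2, I, Rmin_left by lra.
    split; auto. rewrite sqrt8. apply ratio_lt'; try lra. nra. }
  split; [intros; apply ineqs; auto|].
  split; [intros c Hc; destruct (large c Hc) as (x & y & ? & ? & ? & ?); exists x, y; auto|].
  split; [intros c Hc; destruct (mid c Hc) as (x & y & ? & ? & ? & ?); exists x, y; auto|].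
  split; [intros; apply ineqs; auto|].
  split; [intros c Hc; destruct (large c Hc) as (x & y & ? & ? & ? & E); exists x, y; rewrite E; auto|].
  split; [intros c Hc; destruct (mid c Hc) as (x & y & ? & ? & ? & E); exists x, y; rewrite E; auto|].
  split; [intros; apply ineqs; auto|].
  split.
  - intros c Hc.
    destruct exB as (Sx & Sy & Ht & D1 & D2 & I).
    exists (0,PI/4), (0,3*PI/4). do 2 (split; auto).
    unfold p_metric, s_metric. rewrite Ht, D1, D2.
    pose proof PI_gt3.
    assert (ic : / sqrt 2 * / sqrt 2 = / 2) by (rewrite <- Rinv_mult, s2; auto).
    assert (0 < / sqrt 2) by (apply Rinv_0_lt_compat; lra).
    assert (cc : / 2 < c * c) by nra.
    apply ratio_lt; try lra. apply sqrt_lt_R0; nra.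
    assert (sqrt ((PI/2)^2 + 4*(PI/4)*(PI/4)) < c * PI).
    { apply sqrt_lt_sq; try nra.
      assert (0 < (c*c - /2) * (PI*PI)) by (apply Rmult_lt_0_compat; nra). nra. }
    nra.
  - intros c Hc.
    destruct (exA 2 ltac:(lra)) as (Sx & Sy & Ht & D1 & D2 & I).
    exists (0,1), (2,1). do 2 (split; auto).
    unfold p_metric, s_metric. rewrite Ht, D1, D2, I.
    assert (0 < 2 / sqrt (2^2+4*1*1)) by (apply Rdiv_lt_0_compat; [lra| apply sqrt_lt_R0; lra]).
    nra.
Qed.
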